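(* Let $T$ be a triangle and $a\in[0,1]$. If $h(n,T)\le a n^3(1+o(1))$ as $n\to\infty$, then $h(n,T)\le a n^3$ for every positive integer $n$.
   Context: For a triangle $T$ with side lengths $a_1,a_2,a_3$ and $\varepsilon>0$, with $\varepsilon'=\varepsilon\min\{a_1,a_2,a_3\}$, a triangle $A'B'C'$ is $\varepsilon$-congruent to $T$ if there are $A,B,C\in\mathbb{R}^2$ with $ABC$ congruent to $T$ and $A',B',C'$ within distance $\varepsilon'$ of $A,B,C$ respectively. $h(n,T,\varepsilon)$ is the maximum over $n$-point sets $P\subseteq\mathbb{R}^2$ of the number of 3-subsets of $P$ forming triangles $\varepsilon$-congruent to $T$, and $h(n,T)=\min_{\varepsilon>0}h(n,T,\varepsilon)$. *)

(* Defs.v *)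
From HB Require Import structures.
From mathcomp Require Import all_boot all_order all_algebra.
From mathcomp Require Import boolp reals.
Set Implicit Arguments. Unset Strict Implicit. Unset Printing Implicit Defensive.
Import Order.TTheory GRing.Theory Num.Theory.
Local Open Scope ring_scope.

Section Defs.
Variable R : realType.

Definition point := (R * R)%type.

Definition dist (p q : point) : R :=
  Num.sqrt ((p.1 - q.1) ^+ 2 + (p.2 - q.2) ^+ 2).

(* T is given by its side lengths a1 a2 a3 (a nondegenerate triangle). *)
Definition is_triangle (a1 a2 a3 : R) : Prop :=
  0 < a1 /\ 0 < a2 /\ 0 < a3 /\ a1 < a2 + a3 /\ a2 < a1 + a3 /\ a3 < a1 + a2.

Definition congruentT (a1 a2 a3 : R) (A B C : point) : Prop :=
  dist B C = a1 /\ dist C A = a2 /\ dist A B = a3.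

Definition eps_congruent (a1 a2 a3 eps : R) (A' B' C' : point) : Prop :=
  let eps' := eps * Num.min a1 (Num.min a2 a3) in
  exists A B C : point, congruentT a1 a2 a3 A B C /\
    dist A' A <= eps' /\ dist B' B <= eps' /\ dist C' C <= eps'.

Definition good_triple (a1 a2 a3 eps : R) n (p : 'I_n -> point)
    (S : {set 'I_n}) : Prop :=
  exists i j k : 'I_n, S = [set i; j; k] /\
    eps_congruent a1 a2 a3 eps (p i) (p j) (p k).

Definition count_good (a1 a2 a3 eps : R) n (p : 'I_n -> point) : nat :=
  #|[set S : {set 'I_n} | (#|S| == 3)%N && `[< good_triple a1 a2 a3 eps p S >]]|.

Definition h_eps (a1 a2 a3 eps : R) (n : nat) : nat :=
  \max_(k < ('C(n, 3)).+1 |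
     `[< exists p : 'I_n -> point, injective p /\ count_good a1 a2 a3 eps p = k >]) k.

(* h(n,T) = min over eps > 0 of h(n,T,eps) (values lie in [0, C(n,3)]) *)
Definition h (a1 a2 a3 : R) (n : nat) : nat :=
  \big[minn/'C(n, 3)]_(k < ('C(n, 3)).+1 |
     `[< exists eps : R, 0 < eps /\ h_eps a1 a2 a3 eps n = k >]) k.

End Defs.

(* Main.v *)
Require Import Defs.
From HB Require Import structures.
From mathcomp Require Import all_boot all_order all_algebra.
From mathcomp Require Import boolp reals.
From mathcomp Require Import ring lra zify.
Import Order.TTheory GRing.Theory Num.Theory.
Local Open Scope ring_scope.

Lemma dist_shift (R : realType) (P A : point R) (s : R) : 0 <= s ->
  dist (P.1 + s, P.2) A <= dist P A + s.
Proof.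
move=> s0; rewrite /dist /=.
set a := P.1 - A.1; set b := P.2 - A.2.
have -> : P.1 + s - A.1 = a + s by rewrite /a; lra.
set Z := a ^+ 2 + b ^+ 2.
have Z0 : 0 <= Z by rewrite /Z addr_ge0 // sqr_ge0.
have sZ0 : 0 <= Num.sqrt Z := sqrtr_ge0 Z.
have sZ2 : Num.sqrt Z ^+ 2 = Z := sqr_sqrtr Z0.
have Y0 : 0 <= Num.sqrt Z + s by lra.
rewrite -(ger0_norm Y0) -sqrtr_sqr ler_sqrt; last exact: sqr_ge0.
have : a <= Num.sqrt Z.
  case: (leP a 0) => ha; first lra.
  rewrite -(ler_pXn2r (n:=2)) //; last by rewrite nnegrE; lra.
  by rewrite sZ2 /Z lerDl sqr_ge0.
move=> haz.
rewrite /Z in sZ2 *; nra.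
Qed.
Lemma rbigmin_le (R : realType) (I : eqType) (r : seq I) (P : pred I) (F : I -> R) x i0 :
  i0 \in r -> P i0 -> \big[Num.min/x]_(i <- r | P i) F i <= F i0.
Proof.
elim: r => [//|y r IH]; rewrite inE big_cons => /orP[/eqP <- -> | ir Pi].
  by rewrite ge_min lexx.
case: (P y); last exact: IH.
by rewrite ge_min IH ?orbT.
Qed.

Section Blow.
Variables (R : realType) (a1 a2 a3 : R) (n m : nat) (m_gt0 : (0 < m)%N).
Variables (p : 'I_n -> point R) (ip : injective p).
Variables (eps : R) (eps_gt0 : 0 < eps).
Hypothesis mn_gt0 : 0 < Num.min a1 (Num.min a2 a3).

Lemma fP (k : 'I_(n * m)) : (k %/ m < n)%N.
Proof. by rewrite ltn_divLR. Qed.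
Definition fk k := Ordinal (fP k).
Definition rk (k : 'I_(n * m)) : 'I_m := Ordinal (ltn_pmod k m_gt0).
Lemma gP (x : 'I_n) (j : 'I_m) : (x * m + j < n * m)%N.
Proof. have := ltn_ord x; have := ltn_ord j; nia. Qed.
Definition gk x j := Ordinal (gP x j).
Lemma fg x j : fk (gk x j) = x.
Proof. by apply: val_inj; rewrite /= divnMDl // divn_small ?addn0. Qed.
Lemma rg x j : rk (gk x j) = j.
Proof. by apply: val_inj; rewrite /= modnMDl modn_small. Qed.
Lemma gfr k : gk (fk k) (rk k) = k.
Proof. by apply: val_inj; rewrite /= -divn_eq. Qed.

Definition D := \big[Num.min/1]_(ij : 'I_n * 'I_n | ij.1 != ij.2)
  (`|(p ij.1).1 - (p ij.2).1| + `|(p ij.1).2 - (p ij.2).2|).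

Lemma D_gt0 : 0 < D.
Proof.
rewrite /D; apply: (big_ind (fun x => 0 < x)) => //.
  by move=> x y x0 y0; rewrite lt_min x0 y0.
case=> i j /= ij.
have : p i != p j by apply: contra ij => /eqP /ip ->.
case: (p i) (p j) => [x1 y1] [x2 y2].
case: (eqVneq x1 x2) => [-> | h1] ; case: (eqVneq y1 y2) => [-> | h2] //.
- by rewrite eqxx.
- move=> _; rewrite subrr normr0 add0r normr_gt0 subr_eq0 //.
- move=> _; rewrite subrr normr0 addr0 normr_gt0 subr_eq0 //.
- move=> _; apply: ltr_pwDl; first by rewrite normr_gt0 subr_eq0.
  exact: normr_ge0.
Qed.

Lemma D_le i j : i != j ->
  D <= `|(p i).1 - (p j).1| + `|(p i).2 - (p j).2|.
Proof.
move=> ij; rewrite /D.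
apply: (@rbigmin_le _ _ _ _ (fun ij : 'I_n * 'I_n => `|(p ij.1).1 - (p ij.2).1| + `|(p ij.1).2 - (p ij.2).2|) _ (i, j)) => //.
exact: mem_index_enum.
Qed.

Definition mn := Num.min a1 (Num.min a2 a3).
Definition t := Num.min D (eps / 2 * mn) / (2 * m%:R).

Lemma t_gt0 : 0 < t.
Proof.
rewrite /t divr_gt0 //; last by rewrite mulr_gt0 // ltr0n.
by rewrite lt_min D_gt0 /= mulr_gt0 // divr_gt0.
Qed.

Lemma tm_le : t * m%:R <= Num.min D (eps / 2 * mn) / 2.
Proof.
have m0 : 0 < m%:R :> R by rewrite ltr0n.
rewrite /t invfM mulrA -mulrA [_^-1 * _]mulrC mulfV ?gt_eqF //.
by rewrite mulr1.
Qed.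

Definition q (k : 'I_(n * m)) : point R :=
  ((p (fk k)).1 + t * (rk k)%:R, (p (fk k)).2).

Lemma q_inj : injective q.
Proof.
have tm := tm_le; have t0 := t_gt0.
have mD : Num.min D (eps / 2 * mn) <= D by rewrite ge_min lexx.
move=> k k' [e1 e2].
have rl : (rk k)%:R < m%:R :> R by rewrite ltr_nat.
have rl' : (rk k')%:R < m%:R :> R by rewrite ltr_nat.
have r0 : 0 <= (rk k)%:R :> R by [].
have r0' : 0 <= (rk k')%:R :> R by [].
case: (eqVneq (fk k) (fk k')) => [ef | nf].
  rewrite -[k]gfr -[k']gfr ef; congr gk.
  rewrite ef in e1; move: e1 => /addrI /(mulfI (lt0r_neq0 t0)) /eqP.
  by rewrite eqr_nat => /eqP h; apply: val_inj.
have := D_le _ _ nf; rewrite e2 subrr normr0 addr0.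
have -> : (p (fk k)).1 - (p (fk k')).1 = t * (rk k')%:R - t * (rk k)%:R by lra.
rewrite -mulrBr normrM gtr0_norm //.
have : `|(rk k')%:R - (rk k)%:R| < m%:R :> R.
  by rewrite ltr_norml; apply/andP; split; lra.
move=> hn hD.
have : t * `|(rk k')%:R - (rk k)%:R : R| < t * m%:R by rewrite ltr_pM2l.
move=> h; have key : D < t * m%:R by apply: le_lt_trans hD h.
exfalso; have := D_gt0; clear -key tm mD; lra.
Qed.

Lemma q_close k (A : point R) : dist (p (fk k)) A <= eps / 2 * mn ->
  dist (q k) A <= eps * mn.
Proof.
move=> h; have tm := tm_le; have t0 := t_gt0.
have mD : Num.min D (eps / 2 * mn) <= eps / 2 * mn by rewrite ge_min lexx orbT.
have s0 : 0 <= t * (rk k)%:R by rewrite mulr_ge0 // ltW.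
have := @dist_shift R (p (fk k)) A _ s0.
have : t * (rk k)%:R <= t * m%:R.
  by rewrite ler_pM2l // ler_nat ltnW.
have : 0 < eps * mn by rewrite mulr_gt0.
rewrite /q; lra.
Qed.

Definition sel (u : 'I_m * 'I_m * 'I_m) (r : nat) : 'I_m :=
  if r == 0%N then u.1.1 else if r == 1%N then u.1.2 else u.2.
Definition Gf (S : {set 'I_n}) u (x : 'I_n) := gk x (sel u (index x (enum S))).
Definition Phi (Su : {set 'I_n} * ('I_m * 'I_m * 'I_m)) :=
  [set Gf Su.1 Su.2 x | x in Su.1].

Lemma fG S u x : fk (Gf S u x) = x.
Proof. exact: fg. Qed.

Lemma Phi_img S u : [set fk y | y in Phi (S, u)] = S.
Proof.
rewrite /Phi /= -imset_comp.
rewrite (eq_imset (g := id)); first exact: imset_id.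
by move=> x /=; rewrite fG.
Qed.

Lemma Phi_card S u : #|Phi (S, u)| = #|S|.
Proof.
by rewrite card_in_imset // => x y _ _ /(congr1 fk); rewrite !fG.
Qed.

Definition Aset := [set S : {set 'I_n} | (#|S| == 3)%N &&
   `[< good_triple a1 a2 a3 (eps / 2) p S >]].
Definition Bset := [set S : {set 'I_(n * m)} | (#|S| == 3)%N &&
   `[< good_triple a1 a2 a3 eps q S >]].

Lemma Phi_good S u : S \in Aset -> Phi (S, u) \in Bset.
Proof.
rewrite !inE => /andP[c3 /asboolP [i [j [k [HS HC]]]]].
rewrite Phi_card c3 /=; apply/asboolP.
exists (Gf S u i), (Gf S u j), (Gf S u k); split.
  rewrite /Phi /=; have -> : [set Gf S u x | x in S] = [set Gf S u x | x in [set i; j; k]] by rewrite -HS.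
  by rewrite !(imsetU, imsetU1, imset_set1).
move: HC; rewrite /eps_congruent /= => [[A [B [C [cg [hA [hB hC]]]]]]].
exists A, B, C; split => //.
rewrite -/mn in hA hB hC *.
by split; [|split]; apply: q_close; rewrite fG.
Qed.

Lemma Phi_inj : {in setX Aset [set: 'I_m * 'I_m * 'I_m] &, injective Phi}.
Proof.
case=> S u [S' u']; rewrite !inE /= !andbT => /andP[c3 _] _ eP.
have eS : S = S' by rewrite -(Phi_img S u) eP Phi_img.
subst S'; congr pair.
have sz : size (enum S) = 3%N by rewrite -cardE; apply/eqP.
have : exists x0 : 'I_n, x0 \in S.
  by apply/set0Pn; rewrite -card_gt0 (eqP c3).
case=> x0 _.
have key : forall r, (r < 3)%N -> sel u r = sel u' r.
  move=> r lr; set x := nth x0 (enum S) r.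
  have xS : x \in S by rewrite -mem_enum mem_nth // sz.
  have : Gf S u x \in Phi (S, u') by rewrite -eP; apply: imset_f.
  case/imsetP => y yS /= e.
  have exy : x = y by rewrite -(fG S u x) e fG.
  subst y; move/(congr1 rk): e; rewrite /Gf !rg.
  by rewrite index_uniq ?sz // enum_uniq.
move: (key 0%N isT) (key 1%N isT) (key 2%N isT); clear key eP.
by case: u => [[u1 u2] u3]; case: u' => [[v1 v2] v3]; rewrite /sel /= => -> -> ->.
Qed.

Lemma blow_count : (count_good a1 a2 a3 (eps / 2) p * m ^ 3 <=
  count_good a1 a2 a3 eps q)%N.
Proof.
rewrite /count_good -/Aset -/Bset.
have -> : (#|Aset| * m ^ 3 = #|setX Aset [set: 'I_m * 'I_m * 'I_m]|)%N.
  by rewrite cardsX cardsT !card_prod card_ord; congr muln; rewrite expnS expnS expn1 mulnA.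
rewrite -(card_in_imset Phi_inj).
apply: subset_leq_card; apply/subsetP => X /imsetP [[S u]].
rewrite inE /= => /andP[SA _] ->; exact: Phi_good.
Qed.

End Blow.
Section H.
Variables (R : realType) (a1 a2 a3 : R).

Lemma count_good_le eps n (p : 'I_n -> point R) :
  (count_good a1 a2 a3 eps p <= 'C(n, 3))%N.
Proof.
rewrite /count_good.
apply: (leq_trans (_ : _ <= #|[set A : {set 'I_n} | #|A| == 3%N]|)%N).
  by apply: subset_leq_card; apply/subsetP => S; rewrite !inE => /andP[].
by rewrite card_draws card_ord.
Qed.

Lemma heps_ge eps n (p : 'I_n -> point R) : injective p ->
  (count_good a1 a2 a3 eps p <= h_eps a1 a2 a3 eps n)%N.
Proof.
move=> ip; rewrite /h_eps.
have lt : (count_good a1 a2 a3 eps p < ('C(n, 3)).+1)%N by rewrite ltnS count_good_le.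
apply: (leq_bigmax_cond (F := fun k : 'I_(('C(n, 3)).+1) => nat_of_ord k) (Ordinal lt)).
by apply/asboolP; exists p.
Qed.

Lemma heps_le eps n : (h_eps a1 a2 a3 eps n <= 'C(n, 3))%N.
Proof.
rewrite /h_eps; apply/bigmax_leqP => k _; by rewrite -ltnS.
Qed.

Lemma heps_attained eps n : exists p : 'I_n -> point R,
  injective p /\ count_good a1 a2 a3 eps p = h_eps a1 a2 a3 eps n.
Proof.
pose p0 := fun i : 'I_n => ((i : nat)%:R, 0) : point R.
have ip0 : injective p0.
  by move=> i j [] /eqP; rewrite eqr_nat => /eqP /val_inj.
have lt : (count_good a1 a2 a3 eps p0 < ('C(n, 3)).+1)%N by rewrite ltnS count_good_le.
pose P := fun k : 'I_(('C(n, 3)).+1) =>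
   `[< exists p : 'I_n -> point R, injective p /\ count_good a1 a2 a3 eps p = k >].
have P0 : P (Ordinal lt) by apply/asboolP; exists p0.
rewrite /h_eps.
case: (arg_maxnP (fun k : 'I_(('C(n, 3)).+1) => nat_of_ord k) P0) => k Pk kmax.
have -> : \max_(k < ('C(n, 3)).+1 | P k) k = k.
  apply/eqP; rewrite eqn_leq; apply/andP; split.
    by apply/bigmax_leqP => i Pi; apply: kmax.
  by apply: leq_bigmax_cond.
by move/asboolP: Pk.
Qed.

Lemma bigmin_le (I : eqType) (r : seq I) (P : pred I) (F : I -> nat) x i0 :
  i0 \in r -> P i0 -> (\big[minn/x]_(i <- r | P i) F i <= F i0)%N.
Proof.
elim: r => [//|y r IH]; rewrite inE big_cons => /orP[/eqP <- -> | ir Pi].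
  exact: geq_minl.
case: (P y); last exact: IH.
by rewrite geq_min IH ?orbT.
Qed.

Lemma h_le_heps eps n : 0 < eps -> (h a1 a2 a3 n <= h_eps a1 a2 a3 eps n)%N.
Proof.
move=> e0; rewrite /h.
have lt : (h_eps a1 a2 a3 eps n < ('C(n, 3)).+1)%N by rewrite ltnS heps_le.
apply: (@bigmin_le _ _ _ (fun k : 'I_(('C(n, 3)).+1) => nat_of_ord k) _ (Ordinal lt)).
  exact: mem_index_enum.
by apply/asboolP; exists eps.
Qed.

Lemma h_ge c n : (forall eps, 0 < eps -> (c <= h_eps a1 a2 a3 eps n)%N) ->
  (c <= h a1 a2 a3 n)%N.
Proof.
move=> H; rewrite /h; apply: (big_ind (fun x => c <= x)%N).
- exact: (leq_trans (H 1 ltr01) (heps_le _ _)).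
- by move=> x y cx cy; rewrite leq_min cx cy.
- by move=> k /asboolP [eps [e0 <-]]; apply: H.
Qed.
End H.

Lemma h_mul (R : realType) (a1 a2 a3 : R) n m : (0 < m)%N ->
  0 < Num.min a1 (Num.min a2 a3) ->
  (h a1 a2 a3 n * m ^ 3 <= h a1 a2 a3 (n * m))%N.
Proof.
move=> m0 mn0; apply: h_ge => eps e0.
have e2 : 0 < eps / 2 by rewrite divr_gt0.
case: (heps_attained R a1 a2 a3 (eps / 2) n) => p [ip cp].
apply: (leq_trans (_ : _ <= count_good a1 a2 a3 (eps / 2) p * m ^ 3)%N).
  by rewrite leq_mul2r cp h_le_heps // orbT.
apply: leq_trans ((@blow_count R a1 a2 a3 n m m0 p ip eps e0 mn0)) _.
exact: heps_ge _ (@q_inj R a1 a2 a3 n m m0 p ip eps e0 mn0).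
Qed.

Theorem lemma4p1 (R : realType) (a1 a2 a3 : R) (a : R) :
  is_triangle a1 a2 a3 -> 0 <= a -> a <= 1 ->
  (forall e : R, 0 < e -> exists N : nat, forall n : nat, (N <= n)%N ->
     ((h a1 a2 a3 n)%:R : R) <= a * (n%:R) ^+ 3 * (1 + e)) ->
  forall n : nat, (0 < n)%N -> ((h a1 a2 a3 n)%:R : R) <= a * (n%:R) ^+ 3.
Proof.
move=> [t1 [t2 [t3 _]]] a0 a1' H n n0.
have mn0 : 0 < Num.min a1 (Num.min a2 a3) by rewrite !lt_min t1 t2 t3.
set H0 : R := (h a1 a2 a3 n)%:R.
set X : R := (n%:R) ^+ 3.
have X0 : 0 < X by rewrite exprn_gt0 // ltr0n.
rewrite leNgt; apply/negP => hlt.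
pose e := (H0 - a * X) / (2 * X).
have eX : e * X = (H0 - a * X) / 2.
  rewrite /e; field; rewrite (gt_eqF X0); done.
have e0 : 0 < e by rewrite /e divr_gt0 ?subr_gt0 // mulr_gt0.
case: (H e e0) => N HN.
have nm : (N <= n * N.+1)%N by nia.
have := HN _ nm.
have hm := @h_mul R a1 a2 a3 n N.+1 (ltn0Sn N) mn0.
have : H0 * (N.+1%:R) ^+ 3 <= ((h a1 a2 a3 (n * N.+1))%:R : R).
  by rewrite /H0 -natrX -natrM ler_nat.
rewrite natrM exprMn -/X.
set M : R := (N.+1%:R) ^+ 3.
have M0 : 0 < M by rewrite exprn_gt0 // ltr0n.
set Hm : R := (h a1 a2 a3 (n * N.+1))%:R.
move=> l1 l2.
have : H0 * M <= a * (X * M) * (1 + e) by apply: le_trans l1 l2.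
have -> : a * (X * M) * (1 + e) = (a * X * (1 + e)) * M by ring.
rewrite ler_pM2r // => l3.
have l4 : a * (e * X) <= e * X by rewrite ler_piMl // mulr_ge0 // ltW.
have l5 : H0 <= a * X + a * (e * X).
  by move: l3; have -> : a * X * (1 + e) = a * X + a * (e * X) by ring.
move: l4 l5 eX hlt; set Z := e * X; set W := a * X; set V := a * Z.
move=> l4 l5 eX hlt; lra.
Qed.
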